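(* Let $E=E(R/\mathfrak m)$ and for an $R$-module $N$ let $N^\circ=\mathrm{Hom}_R(N,E)$. Then: (a) if $N^\circ$ is simple-$\mathcal F$-torsion-free, then $N$ is simple-$\mathcal F$-divisible; (b) if $N^\circ$ is simple-$\mathcal F$-divisible, then $N$ is simple-$\mathcal F$-torsion-free; (c) if $N$ is reflexive (the canonical map $N\to N^{\circ\circ}$ is an isomorphism), then the converses of (a) and (b) also hold.
   Context: Throughout, $R$ is a commutative Noetherian local ring with maximal ideal $\mathfrak m$, and $E(R/\mathfrak m)$ is the injective hull of $R/\mathfrak m$. $\mathcal F$ is a Gabriel topology on $R$: a nonempty set of ideals of $R$ such that (1) if $\mathfrak a\in\mathcal F$ and $\mathfrak a\subseteq\mathfrak b$ then $\mathfrak b\in\mathcal F$; (2) if $\mathfrak a,\mathfrak b\in\mathcal F$ then $\mathfrak a\cap\mathfrak b\in\mathcal F$; (3) if $\mathfrak b$ is an ideal and there is $\mathfrak a\in\mathcal F$ with $(\mathfrak b:r)\in\mathcal F$ for all $r\in\mathfrak a$, then $\mathfrak b\in\mathcal F$. For an $R$-module $X$ and ideal $\mathfrak a$, $X[\mathfrak a]=\{x\in X:\mathfrak a x=0\}$. $X$ is $\mathcal F$-torsion-free if $X[\mathfrak a]=0$ for all $\mathfrak a\in\mathcal F$, and $\mathcal F$-divisible if $\mathfrak aX=X$ for all $\mathfrak a\in\mathcal F$. $M$ is simple-$\mathcal F$-torsion-free if $M\neq0$, $M$ is $\mathcal F$-torsion-free, and for every submodule $0\neq U\subsetneq M$, $M/U$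 is not $\mathcal F$-torsion-free; $N$ is simple-$\mathcal F$-divisible if $N\ne0$, $N$ is $\mathcal F$-divisible, and no submodule $0\neq V\subsetneq N$ is $\mathcal F$-divisible. *)

(* Defs.v *)
From HB Require Import structures.
From mathcomp Require Import all_boot all_order all_algebra.
From mathcomp Require Import boolp classical_sets functions.
Set Implicit Arguments. Unset Strict Implicit. Unset Printing Implicit Defensive.
Import GRing.Theory.
Local Open Scope ring_scope.
Local Open Scope classical_set_scope.

Section Ideals.
Variable R : comNzRingType.

Definition is_ideal (I : set R) : Prop :=
  [/\ I 0, (forall x y, I x -> I y -> I (x + y)) &
      (forall r x, I x -> I (r * x))].

Definition finitely_generated (I : set R) : Prop :=
  exists s : seq R, (forall x, x \in s -> I x) /\
    (forall x, I x <-> exists c : 'I_(size s) -> R,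
                        x = \sum_(i < size s) c i * s`_i).

Definition noetherian_ring : Prop :=
  forall I : set R, is_ideal I -> finitely_generated I.

Definition maximal_ideal (m : set R) : Prop :=
  [/\ is_ideal m, ~ m 1 &
      (forall I : set R, is_ideal I -> m `<=` I -> I = m \/ I = setT)].

Definition local_ring_with_max (m : set R) : Prop :=
  maximal_ideal m /\ (forall m' : set R, maximal_ideal m' -> m' = m).

Definition colon (b : set R) (r : R) : set R := [set x | b (x * r)].

Definition gabriel_topology (F : set (set R)) : Prop :=
  [/\ (forall a, F a -> is_ideal a),
      (exists a, F a),
      (forall a b, F a -> is_ideal b -> a `<=` b -> F b),
      (forall a b, F a -> F b -> F (a `&` b)) &
      (forall b, is_ideal b ->
         (exists2 a, F a & forall r, a r -> F (colon b r)) -> F b)].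
End Ideals.

Section Modules.
Variables (R : comNzRingType) (F : set (set R)) (M : lmodType R).

Definition is_submodule (U : set M) : Prop :=
  [/\ U 0, (forall x y, U x -> U y -> U (x + y)) &
      (forall r x, U x -> U (r *: x))].

Definition zero_set : set M := [set 0].

Definition ann_sub (X : set M) (a : set R) : set M :=
  [set x | X x /\ forall r, a r -> r *: x = 0].

Definition ideal_times (a : set R) (X : set M) : set M :=
  [set v | exists n (r : 'I_n -> R) (x : 'I_n -> M),
     [/\ forall i, a (r i), forall i, X (x i) & v = \sum_(i < n) r i *: x i]].

Definition F_torsion_free : Prop :=
  forall a, F a -> ann_sub setT a = zero_set.

Definition F_divisible_sub (V : set M) : Prop :=
  forall a, F a -> ideal_times a V = V.

Definition F_divisible : Prop := F_divisible_sub setT.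

(* M/U is F-torsion-free, unfolded: (M/U)[a] = 0 for all a in F, i.e.
   every x with a x ⊆ U lies in U. *)
Definition quotient_F_torsion_free (U : set M) : Prop :=
  forall a, F a -> forall x : M, (forall r, a r -> U (r *: x)) -> U x.

Definition simple_F_torsion_free : Prop :=
  [/\ setT <> zero_set, F_torsion_free &
      forall U : set M, is_submodule U -> U <> zero_set -> U <> setT ->
        ~ quotient_F_torsion_free U].

Definition simple_F_divisible : Prop :=
  [/\ setT <> zero_set, F_divisible &
      forall V : set M, is_submodule V -> V <> zero_set -> V <> setT ->
        ~ F_divisible_sub V].
End Modules.

Section Injective.
Variables (R : comNzRingType).

Definition injective_module (E : lmodType R) : Prop :=
  forall (A B : lmodType R) (f : {linear A -> B}) (g : {linear A -> E}),
    injective f -> exists h : {linear B -> E}, forall x, h (f x) = g x.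

Definition essential_sub (E : lmodType R) (S : set E) : Prop :=
  is_submodule S /\
  forall U : set E, is_submodule U -> U <> [set 0] ->
    exists2 x, (U `&` S) x & x <> 0.

(* E is an injective hull of R/m : E is injective and contains an essential
   submodule isomorphic to R/m, i.e. the image of a linear map R -> E whose
   kernel is m. *)
Definition injective_hull_of_residue (m : set R) (E : lmodType R) : Prop :=
  injective_module E /\
  exists iota : {linear R^o -> E},
    [set r | iota r = 0] = m /\ essential_sub (range iota).
End Injective.

Section Hom.
Variables (R : comNzRingType) (U V : lmodType R).

Definition hom_pred : {pred U -> V} := fun f => `[< linear f >].

Lemma hom_pred_closed : subsemimod_closed hom_pred.
Proof.
split; [split|].
- by apply/asboolP => a u v /=; rewrite scaler0 addr0.
- move=> f g /asboolP Hf /asboolP Hg; apply/asboolP => a u v /=.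
  rewrite !fctE; move: (Hf a u v) (Hg a u v) => /= -> ->.
  by rewrite scalerDr addrACA.
- move=> a f /asboolP Hf; apply/asboolP => b u v /=.
  rewrite !fctE; move: (Hf b u v) => /= ->.
  by rewrite scalerDr !scalerA mulrC.
Qed.

HB.instance Definition _ := GRing.isSubmodClosed.Build R (U -> V) hom_pred
  hom_pred_closed.

Record rhom := RHom { hom_fun :> U -> V; hom_funP : hom_pred hom_fun }.
HB.instance Definition _ := [isSub for hom_fun].
HB.instance Definition _ := [Choice of rhom by <:].
HB.instance Definition _ := [SubChoice_isSubLmodule of rhom by <:].
End Hom.

(* N° = Hom_R(N, E) is  rhom N E *)

Section Dual.
Variables (R : comNzRingType) (N E : lmodType R).

Lemma eval_hom_subproof (n : N) : hom_pred (fun f : rhom N E => hom_fun f n).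
Proof. by apply/asboolP => a f g. Qed.

Definition eval_hom (n : N) : rhom (rhom N E) E := RHom (eval_hom_subproof n).

(* N is reflexive (w.r.t. E): the canonical map N -> N°° is an isomorphism;
   being R-linear, this amounts to it being bijective. *)
Definition reflexive_module : Prop := bijective eval_hom.
End Dual.

(* Main.v *)
Require Import Defs.
From HB Require Import structures.
From mathcomp Require Import all_boot all_order all_algebra.
From mathcomp Require Import boolp classical_sets functions.
Set Implicit Arguments. Unset Strict Implicit. Unset Printing Implicit Defensive.
Import GRing.Theory.
Local Open Scope ring_scope.
Local Open Scope classical_set_scope.

Section SubMod.
Variables (R : comNzRingType) (X : lmodType R) (S : set X) (HS : is_submodule S).

Record subm := Subm { sv : X; svP : S sv; svH : HS = HS }.

HB.instance Definition _ := gen_eqMixin subm.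
HB.instance Definition _ := gen_choiceMixin subm.

Lemma sv_inj : injective sv.
Proof. move=> [x Hx e] [y Hy e'] /= exy; subst y; congr Subm; exact: Prop_irrelevance. Qed.

Let S0 : S 0. Proof. by case: HS. Qed.
Let SD x y : S x -> S y -> S (x + y). Proof. by case: HS => _ H _; apply: H. Qed.
Let SZ r x : S x -> S (r *: x). Proof. by case: HS => _ _ H; apply: H. Qed.

Definition sm0 := Subm S0 erefl.
Definition smadd (a b : subm) := Subm (SD (svP a) (svP b)) erefl.
Definition smscale (r : R) (a : subm) := Subm (SZ r (svP a)) erefl.
Definition smopp (a : subm) := smscale (-1) a.

Lemma smaddA : associative smadd.
Proof. by move=> a b c; apply: sv_inj; rewrite /= addrA. Qed.
Lemma smaddC : commutative smadd.
Proof. by move=> a b; apply: sv_inj; rewrite /= addrC. Qed.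
Lemma smadd0 : left_id sm0 smadd.
Proof. by move=> a; apply: sv_inj; rewrite /= add0r. Qed.
Lemma smaddN : left_inverse sm0 smopp smadd.
Proof. by move=> a; apply: sv_inj; rewrite /= scaleN1r addNr. Qed.

HB.instance Definition _ := GRing.isZmodule.Build subm smaddA smaddC smadd0 smaddN.

Lemma smscaleA a b v : smscale a (smscale b v) = smscale (a * b) v.
Proof. by apply: sv_inj; rewrite /= scalerA. Qed.
Lemma smscale1 : left_id 1 smscale.
Proof. by move=> v; apply: sv_inj; rewrite /= scale1r. Qed.
Lemma smscaleDr : right_distributive smscale +%R.
Proof. by move=> a u v; apply: sv_inj; rewrite /= scalerDr. Qed.
Lemma smscaleDl v : {morph smscale^~ v: a b / a + b}.
Proof. by move=> a b; apply: sv_inj; rewrite /= scalerDl. Qed.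

HB.instance Definition _ := GRing.Zmodule_isLmodule.Build R subm smscaleA smscale1 smscaleDr smscaleDl.

Lemma sv_linear : linear sv.
Proof. by move=> a u v. Qed.
End SubMod.

Section MkLin.
Variables (R : comNzRingType) (A B : lmodType R) (f : A -> B) (Hf : linear f).
Definition mkfun := f.
HB.instance Definition _ := GRing.isLinear.Build R A B *:%R mkfun Hf.
Definition mklin : {linear A -> B} := mkfun.
Lemma mklinE x : mklin x = f x. Proof. by []. Qed.
End MkLin.
Section H.
Variables (R : comNzRingType) (N E : lmodType R).
Lemma homlin (f : rhom N E) : linear f. Proof. exact/asboolP/(hom_funP f). Qed.
Lemma homf0 (f : rhom N E) : f 0 = 0.
Proof. have := homlin f 1 0 0; rewrite !addr0 !scale1r => H. apply: (@addrI _ (f 0)). by rewrite addr0 -H. Qed.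
Lemma homfZ (f : rhom N E) r y : f (r *: y) = r *: f y.
Proof. by move: (homlin f r y 0); rewrite !addr0 homf0 addr0. Qed.
Lemma homfD (f : rhom N E) y z : f (y + z) = f y + f z.
Proof. by move: (homlin f 1 y z); rewrite !scale1r. Qed.
Lemma homfsum (f : rhom N E) n (F : 'I_n -> N) : f (\sum_(i < n) F i) = \sum_(i < n) f (F i).
Proof. elim/big_rec2: _ => [|i a b _ <-]; [exact: homf0| exact: homfD]. Qed.
Lemma homZ r (f : rhom N E) y : (r *: f) y = r *: f y. Proof. by []. Qed.
Lemma homD (f g : rhom N E) y : (f + g) y = f y + g y. Proof. by []. Qed.
Lemma hom0 y : (0 : rhom N E) y = 0. Proof. by []. Qed.
Lemma homsum n (F : 'I_n -> rhom N E) y : (\sum_(i < n) F i) y = \sum_(i < n) F i y.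
Proof. elim/big_rec2: _ => //= i a b _ <-; by []. Qed.
Lemma homfB (f : rhom N E) y z : f (y - z) = f y - f z.
Proof. by rewrite -scaleN1r homfD homfZ scaleN1r. Qed.
Lemma hom_eq (f g : rhom N E) : (forall y, f y = g y) -> f = g.
Proof. by move=> H; apply: val_inj; apply/funext => y; exact: H. Qed.
End H.
Section IT.
Variables (R : comNzRingType) (X : lmodType R).

Lemma sub_sum (S : set X) (HS : is_submodule S) n (F : 'I_n -> X) :
  (forall i, S (F i)) -> S (\sum_(i < n) F i).
Proof.
case: HS => S0 SD _ HF; elim/big_rec: _ => // i x _ Sx; exact: SD.
Qed.

Lemma ideal_times_sub (a : set R) (S : set X) : is_ideal a ->
  is_submodule (ideal_times a S).
Proof.
case=> a0 aD aM; split.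
- exists 0%N, (fun _ => 0), (fun _ => 0); split => //; first by case.
  by rewrite big_ord0.
- move=> _ _ [n [r [x [ra Sx ->]]]] [k [r' [x' [ra' Sx' ->]]]].
  exists (n + k)%N, (fun i => match fintype.split i with inl j => r j | inr j => r' j end),
    (fun i => match fintype.split i with inl j => x j | inr j => x' j end); split.
  + by move=> i; case: (fintype.split i).
  + by move=> i; case: (fintype.split i).
  + rewrite big_split_ord /=; congr (_ + _); apply: eq_bigr => i _.
    * by rewrite (unsplitK (inl i)).
    * by rewrite (unsplitK (inr i)).
- move=> c _ [n [r [x [ra Sx ->]]]].
  exists n, (fun i => c * r i), x; split => //; first by move=> i; apply: aM.
  rewrite scaler_sumr; apply: eq_bigr => i _; by rewrite scalerA.
Qed.

Lemma ideal_times1 (a : set R) (S : set X) r x : a r -> S x ->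
  ideal_times a S (r *: x).
Proof.
move=> ar Sx; exists 1%N, (fun _ => r), (fun _ => x); split => //.
by rewrite big_ord1.
Qed.

Lemma ideal_times_le (a : set R) (S : set X) : is_submodule S -> ideal_times a S `<=` S.
Proof.
move=> HS _ [n [r [x [ra Sx ->]]]]; apply: sub_sum => // i.
by case: HS => _ _ SZ; apply: SZ.
Qed.

Lemma notT_ex (S : set X) : S <> setT -> exists x, ~ S x.
Proof.
move=> H; apply: contrapT => nE; apply: H; apply/seteqP; split=> // x _.
apply: contrapT => nx; apply: nE; by exists x.
Qed.

Lemma not0_ex (S : set X) : is_submodule S -> S <> @zero_set _ X -> exists x, S x /\ x <> 0.
Proof.
move=> [S0 _ _] H; apply: contrapT => nE; apply: H; apply/seteqP; split=> x /=.
- move=> Sx; apply: contrapT => nx; apply: nE; by exists x.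
- by move=> ->.
Qed.

Lemma zero_sub : is_submodule (@zero_set _ X).
Proof. split => /=; [by []| by move=> x y -> ->; rewrite addr0 | by move=> r x ->; rewrite scaler0]. Qed.
End IT.
Lemma proper_in_max (R : comNzRingType) (m : set R) :
  local_ring_with_max m -> forall I : set R, is_ideal I -> ~ I 1 -> I `<=` m.
Proof.
move=> [_ Hloc] I HI nI1.
pose P := [set J : set R | J = set0 \/ [/\ is_ideal J, I `<=` J & ~ J 1]].
have [A [PA Amax]] : exists A, P A /\ forall B, A `<` B -> ~ P B.
  apply: Zorn_bigcup => G GP Gtot.
  case: (pselect (exists2 J, G J & J <> set0)) => [[J0 GJ0 J0n]|nE]; last first.
    left; apply/seteqP; split => // x [J GJ Jx]; apply: nE; exists J => //.
    by move=> J0; rewrite J0 in Jx.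
  have PJ J : G J -> J <> set0 -> [/\ is_ideal J, I `<=` J & ~ J 1].
    by move=> GJ Jn; case: (GP J GJ).
  have [[J00 J0D J0M] IJ0 nJ01] := PJ _ GJ0 J0n.
  right; split.
  - split.
    + by exists J0.
    + move=> x y [J1 GJ1 J1x] [J2 GJ2 J2y].
      have J1n : J1 <> set0 by move=> E; rewrite E in J1x.
      have J2n : J2 <> set0 by move=> E; rewrite E in J2y.
      have [[_ D1 _] _ _] := PJ _ GJ1 J1n; have [[_ D2 _] _ _] := PJ _ GJ2 J2n.
      case: (Gtot _ _ GJ1 GJ2) => [S12|S21].
      * by exists J2 => //; apply: D2 => //; exact: S12.
      * by exists J1 => //; apply: D1 => //; exact: S21.
    + move=> r x [J GJ Jx]; have Jn : J <> set0 by move=> E; rewrite E in Jx.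
      have [[_ _ M] _ _] := PJ _ GJ Jn; by exists J => //; apply: M.
  - by move=> x Ix; exists J0 => //; apply: IJ0.
  - move=> [J GJ J1]; have Jn : J <> set0 by move=> E; rewrite E in J1.
    by have [_ _ ] := PJ _ GJ Jn; apply.
have I0 : I 0 by case: HI.
have An : A <> set0.
  move=> A0; apply: (Amax I); last by right; split.
  rewrite A0; rewrite /proper; split; first exact: sub0set.
  by move=> /(_ 0 I0).
have [[A0 AD AM] IA nA1] : [/\ is_ideal A, I `<=` A & ~ A 1] by case: PA.
have mA : maximal_ideal A.
  split; [by split | by [] | ].
  move=> J HJ AJ; case: (pselect (J 1)) => [J1|nJ1].
    right; apply/seteqP; split => // r _; rewrite -[r]mulr1; case: HJ => _ _; exact.
  case: (pselect (A = J)) => [->|AJn]; first by left.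
  exfalso; apply: (Amax J); last by right; split => //; exact: subset_trans AJ.
  rewrite /proper; split => //; move=> JA; apply: AJn; apply/seteqP; split => //.
by rewrite -(Hloc _ mA).
Qed.
Lemma separate (R : comNzRingType) (m : set R) (E X : lmodType R) :
  local_ring_with_max m -> injective_hull_of_residue m E ->
  forall (U : set X) (x : X), is_submodule U -> ~ U x ->
  exists f : rhom X E, (forall u, U u -> f u = 0) /\ f x <> 0.
Proof.
move=> Hloc [Einj [iota [kerm _]]] U x HU nUx.
have [mm _] := Hloc; have [[m0 mD mM] nm1 _] := mm.
have [U0 UD UZ] := HU.
pose W := [set w : X | exists r, exists u, U u /\ w = r *: x + u].
have HW : is_submodule W.
  split.
  - by exists 0, 0; rewrite scale0r addr0.
  - move=> _ _ [c [u [Uu ->]]] [c' [u' [Uu' ->]]]; exists (c + c'), (u + u'); split.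
      exact: UD.
    by rewrite scalerDl addrACA.
  - move=> a _ [c [u [Uu ->]]]; exists (a * c), (a *: u); split; first exact: UZ.
    by rewrite scalerDr scalerA.
have key c c' u u' : U u -> U u' -> c *: x + u = c' *: x + u' -> iota c = iota c'.
  move=> Uu Uu' E1.
  have Jm : m (c - c').
    apply: (proper_in_max Hloc (I := [set r | U (r *: x)])).
    - split => /=; first by rewrite scale0r.
      + by move=> r s Ur Us; rewrite scalerDl; apply: UD.
      + by move=> r s Us; rewrite -scalerA; apply: UZ.
    - by rewrite /= scale1r.
    - rewrite /= scalerBl.
      have -> : c *: x - c' *: x = u' - u.
        by rewrite -[c *: x](addrK u) E1 addrAC [c' *: x + u']addrC addrK.
      by apply: UD => //; rewrite -scaleN1r; apply: UZ.
  have : iota (c - c') = 0 by move: Jm; rewrite -kerm.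
  by move/eqP; rewrite linearB /= subr_eq0 => /eqP.
pose coef (w : subm HW) : R := projT1 (cid (svP w)).
have coefP (w : subm HW) : exists u, U u /\ sv w = coef w *: x + u := projT2 (cid (svP w)).
pose g (w : subm HW) : E := iota (coef w).
have gP (w : subm HW) c u : U u -> sv w = c *: x + u -> g w = iota c.
  move=> Uu E1; have [u' [Uu' E2]] := coefP w; rewrite /g; apply: (key _ _ u' u) => //.
  by rewrite -E2.
have glin : linear g.
  move=> a w1 w2.
  have [u1 [Uu1 E1]] := coefP w1; have [u2 [Uu2 E2]] := coefP w2.
  rewrite (gP _ (a * coef w1 + coef w2) (a *: u1 + u2)); last first.
  - rewrite /= E1 E2 scalerDr scalerA scalerDl addrACA //.
  - by apply: UD => //; apply: UZ.
  by rewrite /g -(linearP iota a (coef w1 : R^o) (coef w2)).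
have [h hP] := Einj _ _ (mklin (@sv_linear _ _ _ HW)) (mklin glin) (@sv_inj _ _ _ HW).
have hlin : hom_pred h by apply/asboolP; exact: linearP.
exists (RHom hlin) => /=; split.
- move=> u Uu; have Wu : W u by exists 0, u; rewrite scale0r add0r.
  have := hP (Subm (HS:=HW) Wu erefl); rewrite !mklinE /= => ->.
  rewrite (gP _ 0 u) //=; first exact: linear0.
  by rewrite scale0r add0r.
- have Wx : W x by exists 1, 0; rewrite scale1r addr0.
  have := hP (Subm (HS:=HW) Wx erefl); rewrite !mklinE /= => ->.
  rewrite (gP _ 1 0) //= ?scale1r ?addr0 //.
  move=> i1; apply: nm1; rewrite -kerm; exact: i1.
Qed.
Lemma dual_div (R : comNzRingType) (F : set (set R)) (E X : lmodType R) :
  noetherian_ring R -> injective_module E -> gabriel_topology F ->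
  forall (U : set X), is_submodule U -> quotient_F_torsion_free F U ->
  forall a, F a -> forall f : rhom X E, (forall u, U u -> f u = 0) ->
  ideal_times a [set g : rhom X E | forall u, U u -> g u = 0] f.
Proof.
move=> noet Einj [Fid _ _ _ _] U HU qtf a Fa f fU.
have [U0 UD UZ] := HU.
have [s [sa sgen]] := noet a (Fid a Fa).
pose n := size s.
pose r (i : 'I_n) := s`_i.
pose W := [set y : 'I_n -> X | exists z, exists u : 'I_n -> X,
   (forall i, U (u i)) /\ y = (fun i => r i *: z + u i)].
have HW : is_submodule W.
  split.
  - exists 0, (fun _ => 0); split => //; apply/funext => i; by rewrite scaler0 addr0.
  - move=> _ _ [z [u [Uu ->]]] [z' [u' [Uu' ->]]]; exists (z + z'), (u + u'); split.
      by move=> i; apply: UD.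
    apply/funext => i /=; by rewrite scalerDr addrACA.
  - move=> c _ [z [u [Uu ->]]]; exists (c *: z), (c *: u); split.
      by move=> i; apply: UZ.
    apply/funext => i.
    change (c *: (r i *: z + u i) = r i *: (c *: z) + c *: u i).
    by rewrite scalerDr !scalerA mulrC.
have key z z' u u' : (forall i, U (u i)) -> (forall i, U (u' i)) ->
    (fun i => r i *: z + u i) = (fun i => r i *: z' + u' i) -> f z = f z'.
  move=> Uu Uu' E1.
  have Ui i : U (r i *: (z - z')).
    have := congr1 (fun y => y i) E1 => /= E2.
    have -> : r i *: (z - z') = u' i - u i.
      by rewrite scalerBr -[r i *: z](addrK (u i)) E2 addrAC [r i *: z' + _]addrC addrK.
    by apply: UD => //; rewrite -scaleN1r; apply: UZ.
  have Uzz : U (z - z').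
    apply: (qtf a Fa) => rho /sgen [c ->].
    rewrite scaler_suml; apply: sub_sum => // i.
    by rewrite -scalerA; apply: UZ; apply: Ui.
  by apply/eqP; rewrite -subr_eq0 -homfB fU.
pose zz (w : subm HW) : X := projT1 (cid (svP w)).
have zzP (w : subm HW) : exists u : 'I_n -> X, (forall i, U (u i)) /\ sv w = (fun i => r i *: zz w + u i)
  := projT2 (cid (svP w)).
pose g (w : subm HW) : E := f (zz w).
have gP (w : subm HW) z u : (forall i, U (u i)) -> sv w = (fun i => r i *: z + u i) -> g w = f z.
  move=> Uu E1; have [u' [Uu' E2]] := zzP w; rewrite /g; apply: (key _ _ u' u) => //.
  by rewrite -E2.
have glin : linear g.
  move=> c w1 w2.
  have [u1 [Uu1 E1]] := zzP w1; have [u2 [Uu2 E2]] := zzP w2.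
  rewrite (gP _ (c *: zz w1 + zz w2) (c *: u1 + u2)); last first.
  - rewrite /= E1 E2; apply/funext => i.
    change (c *: (r i *: zz w1 + u1 i) + (r i *: zz w2 + u2 i) = r i *: (c *: zz w1 + zz w2) + (c *: u1 i + u2 i)).
    by rewrite !scalerDr !scalerA mulrC addrACA.
  - by move=> i; apply: UD => //; apply: UZ.
  by rewrite homfD homfZ.
have [h hP] := Einj _ _ (mklin (@sv_linear _ _ _ HW)) (mklin glin) (@sv_inj _ _ _ HW).
pose del (i : 'I_n) (y : X) : 'I_n -> X := fun j => if j == i then y else 0.
have hilin i : hom_pred (fun y => h (del i y)).
  apply/asboolP => c y1 y2 /=.
  have -> : del i (c *: y1 + y2) = c *: del i y1 + del i y2.
    apply/funext => j.
    change ((if j == i then c *: y1 + y2 else 0) = c *: (if j == i then y1 else 0) + (if j == i then y2 else 0)).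
    case: (j == i) => //; by rewrite scaler0 addr0.
  exact: linearP.
pose hi i := RHom (hilin i).
exists n, r, hi; split.
- move=> i; rewrite /r; apply: sa; exact: mem_nth.
- move=> i u Uu /=.
  have Wd : W (del i u).
    exists 0, (del i u); split.
      by move=> j; rewrite /del; case: (j == i).
    by apply/funext => j; rewrite scaler0 add0r.
  have := hP (Subm (HS:=HW) Wd erefl); rewrite !mklinE /= => ->.
  rewrite (gP _ 0 (del i u)) ?homf0 //.
    by move=> j; rewrite /del; case: (j == i).
  by apply/funext => j /=; rewrite scaler0 add0r.
- apply: hom_eq => y; rewrite homsum.
  have Wy : W (fun i => r i *: y).
    exists y, (fun _ => 0); split => //; by apply/funext => i; rewrite addr0.
  have := hP (Subm (HS:=HW) Wy erefl); rewrite !mklinE /=.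
  rewrite (gP _ y (fun _ => 0)) //; last by apply/funext => i; rewrite addr0.
  move=> <-.
  have -> : (fun i => r i *: y) = \sum_(i < n) del i (r i *: y).
    rewrite fct_sumE; apply/funext => j.
    rewrite /del -big_mkcond /= (big_pred1 j) // => k /=.
  rewrite linear_sum; apply: eq_bigr => i _.
  exact: (homfZ (hi i) (r i) y).
Qed.

Lemma double_ann (R : comNzRingType) (m : set R) (E N : lmodType R) :
  local_ring_with_max m -> injective_hull_of_residue m E -> reflexive_module N E ->
  forall (U : set (rhom N E)) (f : rhom N E), is_submodule U -> ~ U f ->
  exists x : N, (forall g, U g -> g x = 0) /\ f x <> 0.
Proof.
move=> Hloc Hhull [ginv K1 K2] U f HU nUf.
have [phi [phiU phif]] := separate Hloc Hhull HU nUf.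
exists (ginv phi).
have e (g : rhom N E) : g (ginv phi) = phi g.
  by rewrite -[in RHS](K2 phi).
by split => [g Ug|]; rewrite e //; apply: phiU.
Qed.

Section Main.
Variables (R : comNzRingType) (m : set R) (F : set (set R)) (E N : lmodType R).
Hypotheses (noet : noetherian_ring R) (Hloc : local_ring_with_max m)
  (Fgab : gabriel_topology F) (Hhull : injective_hull_of_residue m E).

Local Notation D := (rhom N E).

Let Fid a : F a -> is_ideal a. Proof. by case: Fgab => H _ _ _ _; apply: H. Qed.
Let Einj : injective_module E. Proof. by case: Hhull. Qed.

Lemma annD_sub (S : set N) : @is_submodule _ (rhom N E) [set g : rhom N E | forall u, S u -> g u = 0].
Proof.
split.
- by move=> u _; exact: hom0.
- move=> f g Hf Hg u Su; rewrite (homD f g u) Hf ?Hg ?addr0 //.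
- move=> r f Hf u Su; rewrite (homZ r f u) Hf ?scaler0 //.
Qed.

Lemma annN_sub (T : set D) : is_submodule [set x : N | forall g, T g -> g x = 0].
Proof.
split => /=.
- by move=> g _; rewrite homf0.
- by move=> x y Hx Hy g Tg; rewrite homfD Hx ?Hy ?addr0.
- by move=> r x Hx g Tg; rewrite homfZ Hx ?scaler0.
Qed.

Lemma D_nz : (setT : set D) <> @zero_set _ D -> (setT : set N) <> @zero_set _ N.
Proof.
move=> Dnz NT; apply: Dnz; apply/seteqP; split => // f _ /=.
apply: hom_eq => y; rewrite hom0.
have : (setT : set N) y by [].
by rewrite NT => /= ->; rewrite homf0.
Qed.

Lemma N_nz : (setT : set N) <> @zero_set _ N -> (setT : set D) <> @zero_set _ D.
Proof.
move=> Nnz DT.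
have [x [_ xnz]] := not0_ex (S := setT) (ltac:(by split)) Nnz.
have [f [_ fx]] := separate Hloc Hhull (zero_sub N) xnz.
have : (setT : set D) f by [].
by rewrite DT => /= f0; apply: fx; rewrite f0 hom0.
Qed.

Lemma hom_nz (g : D) : g <> 0 -> exists y, g y <> 0.
Proof.
move=> gnz; apply: contrapT => nE; apply: gnz; apply: hom_eq => y; rewrite hom0.
by apply: contrapT => gy; apply: nE; exists y.
Qed.

Lemma partA : simple_F_torsion_free F D -> simple_F_divisible F N.
Proof.
move=> [Dnz Dtf Dsimp]; split.
- exact: D_nz.
- move=> a Fa; apply/seteqP; split; first by move=> x _.
  move=> x _; apply: contrapT => nx.
  have [f [fa fx]] := separate Hloc Hhull (ideal_times_sub setT (Fid Fa)) nx.
  apply: fx.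
  have : ann_sub setT a f.
    split => // r ar; apply: hom_eq => y; rewrite homZ hom0 -homfZ; apply: fa.
    exact: ideal_times1.
  by rewrite (Dtf a Fa) => /= ->; rewrite hom0.
- move=> V HV Vnz VnT Vdiv.
  pose U := [set g : D | forall v, V v -> g v = 0].
  apply: (Dsimp U).
  + exact: annD_sub.
  + move=> U0; have [x nVx] := notT_ex VnT.
    have [f [fV fx]] := separate Hloc Hhull HV nVx.
    have Uf : U f := fV.
    by rewrite U0 /= in Uf; apply: fx; rewrite Uf hom0.
  + move=> UT; have [v [Vv vnz]] := not0_ex HV Vnz.
    have [f [_ fv]] := separate Hloc Hhull (zero_sub N) vnz.
    have : U f by rewrite UT.
    by move=> /(_ v Vv).
  + move=> a Fa f Hf v Vv.
    have : ideal_times a V v by rewrite (Vdiv a Fa).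
    case=> n [r [x [ra Vx ->]]].
    rewrite homfsum; apply: big1 => i _; rewrite homfZ -homZ.
    exact: (Hf _ (ra i) _ (Vx i)).
Qed.

Lemma partB : simple_F_divisible F D -> simple_F_torsion_free F N.
Proof.
move=> [Dnz Ddiv Dsimp]; split.
- exact: D_nz.
- move=> a Fa; apply/seteqP; split => x /=; last first.
    by move=> ->; split => // r _; rewrite scaler0.
  case=> _ Hx; apply: contrapT => xnz.
  have [f [_ fx]] := separate Hloc Hhull (zero_sub N) xnz.
  apply: fx.
  have : ideal_times a setT f by rewrite (Ddiv a Fa).
  case=> n [r [g [ra _ ->]]].
  rewrite homsum; apply: big1 => i _; by rewrite homZ -homfZ Hx ?homf0.
- move=> U HU Unz UnT qtf.
  pose V := [set g : D | forall u, U u -> g u = 0].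
  apply: (Dsimp V).
  + exact: annD_sub.
  + move=> V0; have [x nUx] := notT_ex UnT.
    have [f [fU fx]] := separate Hloc Hhull HU nUx.
    have Vf : V f := fU.
    by rewrite V0 /= in Vf; apply: fx; rewrite Vf hom0.
  + move=> VT; have [u [Uu unz]] := not0_ex HU Unz.
    have [f [_ fu]] := separate Hloc Hhull (zero_sub N) unz.
    have : V f by rewrite VT.
    by move=> /(_ u Uu).
  + move=> a Fa; apply/seteqP; split; first exact: ideal_times_le (annD_sub U).
    move=> f Vf; exact: (dual_div noet Einj Fgab HU qtf Fa Vf).
Qed.

Lemma partC1 : reflexive_module N E -> simple_F_divisible F N -> simple_F_torsion_free F D.
Proof.
move=> refl [Nnz Ndiv Nsimp]; split.
- exact: N_nz.
- move=> a Fa; apply/seteqP; split => f /=; last first.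
    by move=> ->; split => // r _; rewrite scaler0.
  case=> _ Hf; apply: hom_eq => y; rewrite hom0.
  have : ideal_times a setT y by rewrite (Ndiv a Fa).
  case=> n [r [x [ra _ ->]]].
  rewrite homfsum; apply: big1 => i _; by rewrite homfZ -homZ (Hf _ (ra i)) hom0.
- move=> U HU Unz UnT qtf.
  pose V := [set x : N | forall g, U g -> g x = 0].
  have HV : is_submodule V by exact: annN_sub.
  apply: (Nsimp V HV).
  + move=> V0; have [f nUf] := notT_ex UnT.
    have [x [Vx fx]] := double_ann Hloc Hhull refl HU nUf.
    have Vx' : V x := Vx.
    by rewrite V0 /= in Vx'; apply: fx; rewrite Vx' homf0.
  + move=> VT; have [g [Ug gnz]] := not0_ex HU Unz.
    have [y gy] := hom_nz gnz.
    have : V y by rewrite VT.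
    by move=> /(_ g Ug).
  + move=> a Fa; apply/seteqP; split; first exact: ideal_times_le HV.
    move=> x Vx; apply: contrapT => nx.
    have [g [ga gx]] := separate Hloc Hhull (ideal_times_sub V (Fid Fa)) nx.
    apply: gx; apply: (Vx g).
    apply: (qtf a Fa) => r ar; apply: contrapT => nU.
    have [x' [Vx' rgx']] := double_ann Hloc Hhull refl HU nU.
    apply: rgx'; rewrite homZ -homfZ; apply: ga.
    exact: ideal_times1.
Qed.

Lemma partC2 : reflexive_module N E -> simple_F_torsion_free F N -> simple_F_divisible F D.
Proof.
move=> refl [Nnz Ntf Nsimp]; split.
- exact: N_nz.
- move=> a Fa; apply/seteqP; split; first by move=> f.
  move=> f _.
  have qz : quotient_F_torsion_free F (@zero_set _ N).
    move=> b Fb x Hx.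
    have : ann_sub setT b x by split => // r br; exact: Hx r br.
    by rewrite (Ntf b Fb).
  have f0 : forall u, @zero_set _ N u -> f u = 0 by move=> u /= ->; exact: homf0.
  have := dual_div noet Einj Fgab (zero_sub N) qz Fa f0.
  case=> n [r [x [ra _ e]]]; by exists n, r, x.
- move=> V HV Vnz VnT Vdiv.
  pose U := [set x : N | forall g, V g -> g x = 0].
  have HU : is_submodule U by exact: annN_sub.
  apply: (Nsimp U HU).
  + move=> U0; have [f nVf] := notT_ex VnT.
    have [x [Ux fx]] := double_ann Hloc Hhull refl HV nVf.
    have Ux' : U x := Ux.
    by rewrite U0 /= in Ux'; apply: fx; rewrite Ux' homf0.
  + move=> UT; have [g [Vg gnz]] := not0_ex HV Vnz.
    have [y gy] := hom_nz gnz.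
    have : U y by rewrite UT.
    by move=> /(_ g Vg).
  + move=> a Fa x Hx g Vg.
    have : ideal_times a V g by rewrite (Vdiv a Fa).
    case=> n [r [h [ra Vh ->]]].
    rewrite homsum; apply: big1 => i _; rewrite homZ -homfZ.
    exact: (Hx _ (ra i) _ (Vh i)).
Qed.
End Main.

Theorem lemma1p7 (R : comNzRingType) (m : set R) (F : set (set R))
    (E N : lmodType R) :
  noetherian_ring R -> local_ring_with_max m -> gabriel_topology F ->
  injective_hull_of_residue m E ->
  [/\ (simple_F_torsion_free F (rhom N E) -> simple_F_divisible F N),
      (simple_F_divisible F (rhom N E) -> simple_F_torsion_free F N) &
      (reflexive_module N E ->
         (simple_F_divisible F N -> simple_F_torsion_free F (rhom N E)) /\
         (simple_F_torsion_free F N -> simple_F_divisible F (rhom N E)))].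
Proof.
move=> noet Hloc Fgab Hhull; split.
- exact: (partA Hloc Fgab Hhull).
- exact: (partB noet Hloc Fgab Hhull).
- move=> refl; split; [exact: (partC1 Hloc Fgab Hhull refl) | exact: (partC2 noet Hloc Fgab Hhull refl)].
Qed.
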